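(* If $X$ is a space such that $\mathbf{w}(X)$ and $\mathbf{aw}(X)$ are not homotopy equivalent, then $X$ is not homotopy equivalent to any first countable space.
   Context: A loop is trivial if path-homotopic to a constant loop. A sequence of loops $\alpha_n$ based at $x$ is a null-sequence if every neighborhood of $x$ contains $\alpha_n([0,1])$ for all but finitely many $n$. $\mathbf{aw}(X)=\{x\in X\mid \text{there is a null-sequence of non-trivial loops based at }x\}$. $\mathbf{w}(X)$ is the subspace of points $x$ at which $X$ is not semilocally simply connected, i.e. every neighborhood of $x$ contains a loop based at $x$ that is non-trivial in $X$. *)

(* Defs.v *)
From Stdlib Require Import Reals.
Open Scope R_scope.

Record space := Space {
  pt :> Type;
  isopen : (pt -> Prop) -> Prop;
  open_full : isopen (fun _ => True);
  open_inter : forall U V, isopen U -> isopen V -> isopen (fun x => U x /\ V x);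
  open_union : forall F : (pt -> Prop) -> Prop,
      (forall U, F U -> isopen U) -> isopen (fun x => exists U, F U /\ U x)
}.
Arguments isopen {s} _.

Inductive generated {T : Type} (S : (T -> Prop) -> Prop) : (T -> Prop) -> Prop :=
| gen_sub : forall U, S U -> generated S U
| gen_full : generated S (fun _ => True)
| gen_inter : forall U V, generated S U -> generated S V ->
    generated S (fun x => U x /\ V x)
| gen_union : forall F : (T -> Prop) -> Prop,
    (forall U, F U -> generated S U) -> generated S (fun x => exists U, F U /\ U x).

Definition gen_space {T : Type} (S : (T -> Prop) -> Prop) : space :=
  @Space T (generated S) (gen_full S) (gen_inter S) (gen_union S).

Definition continuous {X Y : space} (f : X -> Y) : Prop :=
  forall V : Y -> Prop, isopen V -> isopen (fun x => V (f x)).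

Definition subspace (X : space) (P : X -> Prop) : space :=
  gen_space (fun U : {x : X | P x} -> Prop =>
    exists V : X -> Prop, isopen V /\ forall z, U z <-> V (proj1_sig z)).

Definition prod_space (X Y : space) : space :=
  gen_space (fun W : (X * Y)%type -> Prop =>
    exists (U : X -> Prop) (V : Y -> Prop), isopen U /\ isopen V /\
      forall p, W p <-> (U (fst p) /\ V (snd p))).

Definition R_space : space :=
  gen_space (fun U : R -> Prop => exists c r, forall y, U y <-> Rabs (y - c) < r).

Definition I : space := subspace R_space (fun t => 0 <= t <= 1).
Definition I0 : I := exist _ 0 (conj (Rle_refl 0) Rle_0_1).
Definition I1 : I := exist _ 1 (conj Rle_0_1 (Rle_refl 1)).

Definition nbhd {X : space} (x : X) (N : X -> Prop) : Prop :=
  exists U, isopen U /\ U x /\ forall y, U y -> N y.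

Definition loop_at {X : space} (x : X) (alpha : I -> X) : Prop :=
  continuous alpha /\ alpha I0 = x /\ alpha I1 = x.

Definition trivial_loop {X : space} (x : X) (alpha : I -> X) : Prop :=
  exists H : prod_space I I -> X, continuous H /\
    (forall s, H (s, I0) = alpha s) /\ (forall s, H (s, I1) = x) /\
    (forall t, H (I0, t) = x) /\ (forall t, H (I1, t) = x).

(** w(X): points at which X is not semilocally simply connected. *)
Definition w_pred (X : space) (x : X) : Prop :=
  forall N, nbhd x N -> exists alpha : I -> X,
    loop_at x alpha /\ (forall s, N (alpha s)) /\ ~ trivial_loop x alpha.

Definition aw_pred (X : space) (x : X) : Prop :=
  exists alpha : nat -> I -> X,
    (forall n, loop_at x (alpha n) /\ ~ trivial_loop x (alpha n)) /\
    (forall N, nbhd x N -> exists n0, forall n, (n0 <= n)%nat ->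
        forall s, N (alpha n s)).

Definition w_space (X : space) : space := subspace X (w_pred X).
Definition aw_space (X : space) : space := subspace X (aw_pred X).

Definition homotopic {X Y : space} (f g : X -> Y) : Prop :=
  exists H : prod_space X I -> Y, continuous H /\
    (forall x, H (x, I0) = f x) /\ (forall x, H (x, I1) = g x).

Definition homotopy_equivalent (X Y : space) : Prop :=
  exists (f : X -> Y) (g : Y -> X), continuous f /\ continuous g /\
    homotopic (fun x => g (f x)) (fun x => x) /\
    homotopic (fun y => f (g y)) (fun y => y).

Definition first_countable (X : space) : Prop :=
  forall x : X, exists B : nat -> X -> Prop,
    (forall n, nbhd x (B n)) /\
    (forall N, nbhd x N -> exists n, forall y, B n y -> N y).

(* Main.v *)
Require Import Defs.
From Stdlib Require Import Reals Lra Lia.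
From Stdlib Require Import FunctionalExtensionality PropExtensionality ProofIrrelevance ClassicalEpsilon Classical.
Open Scope R_scope.

Lemma pred_ext {T} (P Q : T -> Prop) : (forall x, P x <-> Q x) -> P = Q.
Proof. intro H; apply functional_extensionality; intro x; apply propositional_extensionality; apply H. Qed.

Lemma open_ext {X : space} (U V : X -> Prop) : isopen U -> (forall x, U x <-> V x) -> isopen V.
Proof. intros HU H; rewrite <- (pred_ext _ _ H); exact HU. Qed.

Lemma open_local {X : space} (V : X -> Prop) :
  (forall x, V x -> exists U, isopen U /\ U x /\ forall y, U y -> V y) -> isopen V.
Proof.
  intro H.
  apply (open_ext (fun x => exists U, (isopen U /\ forall y, U y -> V y) /\ U x)).
  - apply open_union. intros U [HU _]; exact HU.
  - intro x; split.
    + intros [U [[_ HUV] Ux]]; auto.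
    + intro Vx; destruct (H x Vx) as [U [HU [Ux HUV]]]; exists U; auto.
Qed.

Lemma open_or {X : space} (U V : X -> Prop) : isopen U -> isopen V -> isopen (fun x => U x \/ V x).
Proof.
  intros HU HV.
  apply (open_ext (fun x => exists W, (W = U \/ W = V) /\ W x)).
  - apply open_union. intros W [-> | ->]; assumption.
  - intro x; split.
    + intros [W [[-> | ->] Wx]]; auto.
    + intros [Ux|Vx]; eauto.
Qed.

Lemma open_empty {X : space} : isopen (fun _ : X => False).
Proof.
  apply (open_ext (fun x => exists W : X -> Prop, False /\ W x)).
  - apply open_union. intros W [].
  - intro x; split; [intros [W [[] _]] | intros []].
Qed.

Lemma cont_gen {Z : space} {T} (S : (T -> Prop) -> Prop) (f : Z -> T) :
  (forall U, S U -> isopen (fun x => U (f x))) -> @continuous Z (gen_space S) f.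
Proof.
  intros HS V HV. simpl in HV. induction HV.
  - auto.
  - apply open_full.
  - apply open_inter; auto.
  - apply (open_ext (fun x => exists W, (exists U, F U /\ W = (fun y => U (f y))) /\ W x)).
    + apply open_union. intros W [U [FU ->]]; auto.
    + intro x; split.
      * intros [W [[U [FU ->]] Wx]]; eauto.
      * intros [U [FU Ux]]. exists (fun y => U (f y)); eauto.
Qed.

Lemma cont_comp {X Y Z : space} (f : X -> Y) (g : Y -> Z) :
  continuous f -> continuous g -> continuous (fun x => g (f x)).
Proof. intros Hf Hg V HV. apply (Hf _ (Hg _ HV)). Qed.

Lemma cont_id {X : space} : continuous (fun x : X => x).
Proof. intros V HV; exact HV. Qed.

Lemma cont_const {X Y : space} (c : Y) : continuous (fun _ : X => c).
Proof.
  intros V HV. destruct (classic (V c)) as [H|H].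
  - apply (open_ext (fun _ => True)); [apply open_full|tauto].
  - apply (open_ext (fun _ => False)); [apply open_empty|tauto].
Qed.

Lemma cont_fst {X Y : space} : @continuous (prod_space X Y) X fst.
Proof.
  intros U HU. apply gen_sub. exists U, (fun _ => True).
  split; [exact HU|split; [apply open_full|]]. intro p; tauto.
Qed.

Lemma cont_snd {X Y : space} : @continuous (prod_space X Y) Y snd.
Proof.
  intros U HU. apply gen_sub. exists (fun _ => True), U.
  split; [apply open_full|split; [exact HU|]]. intro p; tauto.
Qed.

Lemma cont_pair {Z X Y : space} (f : Z -> X) (g : Z -> Y) :
  continuous f -> continuous g -> @continuous Z (prod_space X Y) (fun z => (f z, g z)).
Proof.
  intros Hf Hg. apply cont_gen. intros W [U [V [HU [HV HW]]]].
  apply (open_ext (fun z => U (f z) /\ V (g z))).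
  - apply open_inter; auto.
  - intro z; rewrite HW; simpl; tauto.
Qed.

Lemma cont_proj {X : space} (P : X -> Prop) : @continuous (subspace X P) X (@proj1_sig _ _).
Proof.
  intros V HV. apply gen_sub. exists V. split; [exact HV|]. intro z; tauto.
Qed.

Lemma cont_into_sub {Z X : space} (P : X -> Prop) (f : Z -> subspace X P) :
  continuous (fun z => proj1_sig (f z)) -> continuous f.
Proof.
  intro Hf. apply cont_gen. intros U [V [HV HU]].
  apply (open_ext (fun z => V (proj1_sig (f z)))).
  - apply Hf; exact HV.
  - intro z; rewrite HU; tauto.
Qed.

Definition rcont {Z : space} (f : Z -> R) : Prop :=
  forall z eps, 0 < eps -> exists U, isopen U /\ U z /\ forall y, U y -> Rabs (f y - f z) < eps.

Lemma rabs_lt x e : Rabs x < e <-> - e < x < e.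
Proof.
  split.
  - intro H. apply Rabs_def2 in H. lra.
  - intros [H1 H2]. apply Rabs_def1; lra.
Qed.

Lemma rcont_cont {Z : space} (f : Z -> R) : rcont f -> @continuous Z R_space f.
Proof.
  intro Hf. apply cont_gen. intros U [c [r HU]].
  apply open_local. intros z Hz. simpl in Hz. rewrite HU in Hz.
  destruct (Hf z (r - Rabs (f z - c))) as [W [HW [Wz HWf]]]; [lra|].
  exists W. split; [exact HW|split; [exact Wz|]].
  intros y Wy. simpl. rewrite HU. specialize (HWf y Wy).
  replace (f y - c) with ((f y - f z) + (f z - c)) by ring.
  eapply Rle_lt_trans; [apply Rabs_triang|]. lra.
Qed.

Lemma cont_rcont {Z : space} (f : Z -> R) : @continuous Z R_space f -> rcont f.
Proof.
  intros Hf z eps Heps.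
  exists (fun y => Rabs (f y - f z) < eps). split; [|split].
  - apply (Hf (fun y => Rabs (y - f z) < eps)). apply gen_sub. exists (f z), eps. tauto.
  - simpl. unfold Rminus. rewrite Rplus_opp_r, Rabs_R0. exact Heps.
  - auto.
Qed.

Lemma rcont_const {Z : space} (c : R) : rcont (fun _ : Z => c).
Proof.
  intros z eps He. exists (fun _ => True). split; [apply open_full|split; [trivial|]].
  intros. unfold Rminus. rewrite Rplus_opp_r, Rabs_R0. exact He.
Qed.

Lemma open_and3 {X : space} (U V : X -> Prop) : isopen U -> isopen V -> isopen (fun x => U x /\ V x).
Proof. apply open_inter. Qed.

Lemma rcont_plus {Z : space} (f g : Z -> R) : rcont f -> rcont g -> rcont (fun z => f z + g z).
Proof.
  intros Hf Hg z eps He.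
  destruct (Hf z (eps/2)) as [U [HU [Uz Hu]]]; [lra|].
  destruct (Hg z (eps/2)) as [V [HV [Vz Hv]]]; [lra|].
  exists (fun y => U y /\ V y). split; [apply open_inter; auto|split; [auto|]].
  intros y [Uy Vy]. specialize (Hu y Uy). specialize (Hv y Vy).
  apply rabs_lt in Hu; apply rabs_lt in Hv; apply rabs_lt; lra.
Qed.

Lemma rcont_scal {Z : space} (c : R) (f : Z -> R) : rcont f -> rcont (fun z => c * f z).
Proof.
  intros Hf z eps He.
  destruct (Hf z (eps / (Rabs c + 1))) as [U [HU [Uz Hu]]].
  { apply Rdiv_lt_0_compat; [lra|]. pose proof (Rabs_pos c); lra. }
  exists U. split; [auto|split; [auto|]].
  intros y Uy. specialize (Hu y Uy).
  replace (c * f y - c * f z) with (c * (f y - f z)) by ring.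
  rewrite Rabs_mult.
  pose proof (Rabs_pos c). pose proof (Rabs_pos (f y - f z)).
  assert (Rabs (f y - f z) * (Rabs c + 1) < eps).
  { apply (Rmult_lt_compat_r (Rabs c + 1)) in Hu; [|lra].
    unfold Rdiv in Hu. rewrite Rmult_assoc, Rinv_l in Hu; lra. }
  nra.
Qed.

Lemma rcont_mult {Z : space} (f g : Z -> R) : rcont f -> rcont g -> rcont (fun z => f z * g z).
Proof.
  intros Hf Hg z eps He.
  set (a := Rabs (f z) + 1). set (b := Rabs (g z) + 1).
  assert (Ha : 0 < a) by (pose proof (Rabs_pos (f z)); unfold a; lra).
  assert (Hb : 0 < b) by (pose proof (Rabs_pos (g z)); unfold b; lra).
  set (e := Rmin 1 (eps / (2 * (a + b)))).
  assert (He0 : 0 < e).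
  { unfold e, Rmin; destruct (Rle_dec 1 (eps / (2 * (a + b)))); [lra|].
    apply Rdiv_lt_0_compat; lra. }
  assert (He1 : e <= 1) by (unfold e; apply Rmin_l).
  assert (He2 : e * (2 * (a + b)) <= eps).
  { assert (e <= eps / (2 * (a + b))) by (unfold e; apply Rmin_r).
    apply (Rmult_le_compat_r (2 * (a+b))) in H; [|lra].
    unfold Rdiv in H. rewrite Rmult_assoc, Rinv_l in H; lra. }
  destruct (Hf z e He0) as [U [HU [Uz Hu]]].
  destruct (Hg z e He0) as [V [HV [Vz Hv]]].
  exists (fun y => U y /\ V y). split; [apply open_inter; auto|split; [auto|]].
  intros y [Uy Vy]. specialize (Hu y Uy). specialize (Hv y Vy).
  replace (f y * g y - f z * g z) with (f y * (g y - g z) + g z * (f y - f z)) by ring.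
  eapply Rle_lt_trans; [apply Rabs_triang|]. rewrite !Rabs_mult.
  assert (Rabs (f y) <= a).
  { replace (f y) with ((f y - f z) + f z) by ring.
    eapply Rle_trans; [apply Rabs_triang|]. unfold a; lra. }
  assert (Rabs (g z) <= b) by (unfold b; lra).
  pose proof (Rabs_pos (f y)). pose proof (Rabs_pos (g z)).
  pose proof (Rabs_pos (g y - g z)). pose proof (Rabs_pos (f y - f z)).
  assert (Rabs (f y) * Rabs (g y - g z) <= a * e) by (apply Rmult_le_compat; lra).
  assert (Rabs (g z) * Rabs (f y - f z) <= b * e) by (apply Rmult_le_compat; lra).
  assert (a*e + b*e < e*(2*(a+b))) by nra.
  lra.
Qed.

Lemma rmin_lip a b c d e : Rabs (a - c) < e -> Rabs (b - d) < e -> Rabs (Rmin a b - Rmin c d) < e.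
Proof.
  rewrite !rabs_lt. intros. unfold Rmin.
  destruct (Rle_dec a b), (Rle_dec c d); lra.
Qed.

Lemma rmax_lip a b c d e : Rabs (a - c) < e -> Rabs (b - d) < e -> Rabs (Rmax a b - Rmax c d) < e.
Proof.
  rewrite !rabs_lt. intros. unfold Rmax.
  destruct (Rle_dec a b), (Rle_dec c d); lra.
Qed.

Lemma rcont_min {Z : space} (f g : Z -> R) : rcont f -> rcont g -> rcont (fun z => Rmin (f z) (g z)).
Proof.
  intros Hf Hg z eps He.
  destruct (Hf z eps He) as [U [HU [Uz Hu]]].
  destruct (Hg z eps He) as [V [HV [Vz Hv]]].
  exists (fun y => U y /\ V y). split; [apply open_inter; auto|split; [auto|]].
  intros y [Uy Vy]. apply rmin_lip; auto.
Qed.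

Lemma rcont_max {Z : space} (f g : Z -> R) : rcont f -> rcont g -> rcont (fun z => Rmax (f z) (g z)).
Proof.
  intros Hf Hg z eps He.
  destruct (Hf z eps He) as [U [HU [Uz Hu]]].
  destruct (Hg z eps He) as [V [HV [Vz Hv]]].
  exists (fun y => U y /\ V y). split; [apply open_inter; auto|split; [auto|]].
  intros y [Uy Vy]. apply rmax_lip; auto.
Qed.

Lemma rcont_comp {Y Z : space} (g : Z -> Y) (f : Y -> R) : continuous g -> rcont f -> rcont (fun z => f (g z)).
Proof.
  intros Hg Hf. apply cont_rcont. apply cont_comp; auto. apply rcont_cont; auto.
Qed.

Lemma open_lt {Z : space} (f : Z -> R) c : rcont f -> isopen (fun z => c < f z).
Proof.
  intro Hf. apply open_local. intros z Hz.
  destruct (Hf z (f z - c)) as [U [HU [Uz Hu]]]; [lra|].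
  exists U; split; [auto|split; [auto|]]. intros y Uy. specialize (Hu y Uy).
  apply rabs_lt in Hu; lra.
Qed.

Lemma open_gt {Z : space} (f : Z -> R) c : rcont f -> isopen (fun z => f z < c).
Proof.
  intro Hf. apply open_local. intros z Hz.
  destruct (Hf z (c - f z)) as [U [HU [Uz Hu]]]; [lra|].
  exists U; split; [auto|split; [auto|]]. intros y Uy. specialize (Hu y Uy).
  apply rabs_lt in Hu; lra.
Qed.

Lemma pasting {Z X : space} (A B : Z -> Prop) (f f1 f2 : Z -> X) :
  isopen (fun z => ~ A z) -> isopen (fun z => ~ B z) -> (forall z, A z \/ B z) ->
  (forall z, A z -> f z = f1 z) -> (forall z, B z -> f z = f2 z) ->
  continuous f1 -> continuous f2 -> continuous f.
Proof.
  intros HA HB HAB E1 E2 C1 C2 V HV.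
  apply (open_ext (fun z => (V (f1 z) \/ ~ A z) /\ (V (f2 z) \/ ~ B z))).
  - apply open_inter; apply open_or; auto.
  - intro z. split.
    + intros [[H1|H1] [H2|H2]]; destruct (HAB z) as [a|b];
        try (rewrite E1; auto; fail); try (rewrite E2; auto; fail); tauto.
    + intro Hv. split.
      * destruct (classic (A z)) as [a|a]; [left; rewrite <- E1; auto|right; auto].
      * destruct (classic (B z)) as [b|b]; [left; rewrite <- E2; auto|right; auto].
Qed.

Definition val (s : I) : R := proj1_sig s.

Lemma val_bnd (s : I) : 0 <= val s <= 1.
Proof. exact (proj2_sig s). Qed.

Lemma I_eq (a b : I) : val a = val b -> a = b.
Proof.
  destruct a as [a Ha], b as [b Hb]. unfold val; simpl. intro E. subst.
  f_equal. apply proof_irrelevance.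
Qed.

Definition clamp (r : R) : R := Rmax 0 (Rmin 1 r).

Lemma clamp_in r : 0 <= clamp r <= 1.
Proof. unfold clamp, Rmax, Rmin. destruct (Rle_dec 1 r), (Rle_dec 0 _); lra. Qed.

Definition mk (r : R) : I := exist _ (clamp r) (clamp_in r).

Lemma val_mk r : val (mk r) = clamp r.
Proof. reflexivity. Qed.

Lemma clamp_id r : 0 <= r <= 1 -> clamp r = r.
Proof. intros. unfold clamp, Rmax, Rmin. destruct (Rle_dec 1 r), (Rle_dec 0 _); lra. Qed.
Lemma clamp_le0 r : r <= 0 -> clamp r = 0.
Proof. intros. unfold clamp, Rmax, Rmin. destruct (Rle_dec 1 r), (Rle_dec 0 _); lra. Qed.
Lemma clamp_ge1 r : 1 <= r -> clamp r = 1.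
Proof. intros. unfold clamp, Rmax, Rmin. destruct (Rle_dec 1 r), (Rle_dec 0 _); lra. Qed.

Lemma mk_val s : mk (val s) = s.
Proof. apply I_eq. rewrite val_mk. apply clamp_id, val_bnd. Qed.

Lemma mk0 r : r <= 0 -> mk r = I0.
Proof. intro. apply I_eq. rewrite val_mk, clamp_le0; auto. Qed.
Lemma mk1 r : 1 <= r -> mk r = I1.
Proof. intro. apply I_eq. rewrite val_mk, clamp_ge1; auto. Qed.

Lemma rcont_val {Z : space} (g : Z -> I) : continuous g -> rcont (fun z => val (g z)).
Proof. intro Hg. apply cont_rcont. apply (cont_comp g (@proj1_sig _ _)); auto. apply cont_proj. Qed.

Lemma rcont_clamp {Z : space} (f : Z -> R) : rcont f -> rcont (fun z => clamp (f z)).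
Proof. intro. unfold clamp. apply rcont_max; [apply rcont_const|]. apply rcont_min; [apply rcont_const|auto]. Qed.

Lemma cont_mk {Z : space} (f : Z -> R) : rcont f -> continuous (fun z => mk (f z)).
Proof.
  intro Hf. apply cont_into_sub. apply rcont_cont. apply (rcont_clamp f Hf).
Qed.

Definition Rmap {X : space} (Q P : prod_space I I -> X) (z : prod_space I I) : X :=
  let p := fst z in let w := val (snd z) in
  if Rle_dec (1/2) w then Q (p, mk (2 * w - 1)) else P (p, mk (1 - 2 * w)).

Lemma rcont_fstv : rcont (fun z : prod_space I I => val (fst z)).
Proof. apply rcont_val, cont_fst. Qed.
Lemma rcont_sndv : rcont (fun z : prod_space I I => val (snd z)).
Proof. apply rcont_val, cont_snd. Qed.

Lemma rcont_lin (f : prod_space I I -> R) c d : rcont f -> rcont (fun z => c * f z + d).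
Proof. intro. apply rcont_plus; [apply rcont_scal; auto|apply rcont_const]. Qed.

Lemma open_notle (f : prod_space I I -> R) c : rcont f -> isopen (fun z => ~ c <= f z).
Proof. intro Hf. apply (open_ext (fun z => f z < c)); [apply open_gt; auto|intro; lra]. Qed.
Lemma open_notge (f : prod_space I I -> R) c : rcont f -> isopen (fun z => ~ f z <= c).
Proof. intro Hf. apply (open_ext (fun z => c < f z)); [apply open_lt; auto|intro; lra]. Qed.

Lemma Rmap_cont {X : space} (Q P : prod_space I I -> X) :
  continuous Q -> continuous P -> (forall p, Q (p, I0) = P (p, I0)) -> continuous (Rmap Q P).
Proof.
  intros CQ CP E.
  apply (pasting (fun z : prod_space I I => 1/2 <= val (snd z)) (fun z : prod_space I I => val (snd z) <= 1/2) _
           (fun z : prod_space I I => Q (fst z, mk (2 * val (snd z) - 1)))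
           (fun z : prod_space I I => P (fst z, mk (1 - 2 * val (snd z))))).
  - apply open_notle, rcont_sndv.
  - apply open_notge, rcont_sndv.
  - intro z; lra.
  - intros z Hz. unfold Rmap. destruct (Rle_dec _ _); [reflexivity|lra].
  - intros z Hz. unfold Rmap. destruct (Rle_dec _ _); [|reflexivity].
    rewrite !mk0 by lra. apply E.
  - apply (@cont_comp _ (prod_space I I) _ (fun z : prod_space I I => (fst z, mk (2 * val (snd z) - 1))) Q); auto.
    apply cont_pair; [apply cont_fst|]. apply cont_mk.
    replace (fun z : prod_space I I => 2 * val (snd z) - 1) with (fun z : prod_space I I => 2 * val (snd z) + - 1)
      by (apply functional_extensionality; intro; ring).
    apply rcont_lin, rcont_sndv.
  - apply (@cont_comp _ (prod_space I I) _ (fun z : prod_space I I => (fst z, mk (1 - 2 * val (snd z)))) P); auto.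
    apply cont_pair; [apply cont_fst|]. apply cont_mk.
    replace (fun z : prod_space I I => 1 - 2 * val (snd z)) with (fun z : prod_space I I => (-2) * val (snd z) + 1)
      by (apply functional_extensionality; intro; ring).
    apply rcont_lin, rcont_sndv.
Qed.

Definition aa (u : R) := Rmin u (1/2) / 2.
Definition p1 (s u : R) := (s - aa u) * (1 + 4 * aa u).
Definition w1 (s u : R) := 1 - Rmin (2 * u) (Rmin (4 * s) (4 - 4 * s)).
Definition w2 (s u : R) := 1 - Rmin (2 - 2 * u) (Rmin (4 * s) (4 - 4 * s)).

Definition Mmap {X : space} (Q P : prod_space I I -> X) (z : prod_space I I) : X :=
  let s := val (fst z) in let u := val (snd z) in
  if Rle_dec u (1/2) then Rmap Q P (mk (p1 s u), mk (w1 s u))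
  else Rmap Q P (I0, mk (w2 s u)).

Lemma rcont_opp {Z : space} (f : Z -> R) : rcont f -> rcont (fun z => - f z).
Proof.
  intro H. replace (fun z => - f z) with (fun z => (-1) * f z) by (apply functional_extensionality; intro; ring).
  apply rcont_scal; auto.
Qed.
Lemma rcont_minus {Z : space} (f g : Z -> R) : rcont f -> rcont g -> rcont (fun z => f z - g z).
Proof. intros. unfold Rminus. apply rcont_plus; auto. apply rcont_opp; auto. Qed.

Ltac rc := repeat (first [ apply rcont_fstv | apply rcont_sndv | apply rcont_const |
  match goal with
  | |- rcont (fun z => @?f z + @?g z) => apply (rcont_plus f g)
  | |- rcont (fun z => @?f z * @?g z) => apply (rcont_mult f g)
  | |- rcont (fun z => @?f z - @?g z) => apply (rcont_minus f g)
  | |- rcont (fun z => Rmin (@?f z) (@?g z)) => apply (rcont_min f g)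
  | |- rcont (fun z => Rmax (@?f z) (@?g z)) => apply (rcont_max f g)
  | |- rcont (fun z => - @?f z) => apply (rcont_opp f)
  end ]).

Lemma rcont_p1 : rcont (fun z : prod_space I I => p1 (val (fst z)) (val (snd z))).
Proof. unfold p1, aa, Rdiv. rc. Qed.
Lemma rcont_w1 : rcont (fun z : prod_space I I => w1 (val (fst z)) (val (snd z))).
Proof. unfold w1. rc. Qed.
Lemma rcont_w2 : rcont (fun z : prod_space I I => w2 (val (fst z)) (val (snd z))).
Proof. unfold w2. rc. Qed.

Lemma val_I0 : val I0 = 0. Proof. reflexivity. Qed.
Lemma val_I1 : val I1 = 1. Proof. reflexivity. Qed.

Lemma Rmap_side {X : space} (Q P : prod_space I I -> X) w :
  (forall t, Q (I1, t) = Q (I0, t)) -> (forall t, P (I1, t) = P (I0, t)) ->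
  Rmap Q P (I1, w) = Rmap Q P (I0, w).
Proof. intros E1 E2. unfold Rmap; cbn [fst snd]. destruct (Rle_dec _ _); auto. Qed.

Lemma Rmap_top {X : space} (Q P : prod_space I I -> X) p : Rmap Q P (p, I1) = Q (p, I1).
Proof. unfold Rmap; cbn [fst snd]. rewrite val_I1. destruct (Rle_dec _ _); [|lra]. rewrite mk1 by lra. reflexivity. Qed.

Lemma Rmap_bot {X : space} (Q P : prod_space I I -> X) p : Rmap Q P (p, I0) = P (p, I1).
Proof. unfold Rmap; cbn [fst snd]. rewrite val_I0. destruct (Rle_dec _ _); [lra|]. rewrite mk1 by lra. reflexivity. Qed.

Lemma Mmap_cont {X : space} (Q P : prod_space I I -> X) :
  continuous Q -> continuous P -> (forall p, Q (p, I0) = P (p, I0)) ->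
  (forall t, Q (I1, t) = Q (I0, t)) -> (forall t, P (I1, t) = P (I0, t)) ->
  (forall p, P (p, I1) = P (I0, I1)) ->
  continuous (Mmap Q P).
Proof.
  intros CQ CP E S1 S2 B.
  assert (CR := Rmap_cont Q P CQ CP E).
  apply (pasting (fun z : prod_space I I => val (snd z) <= 1/2) (fun z : prod_space I I => 1/2 <= val (snd z)) _
           (fun z : prod_space I I => Rmap Q P (mk (p1 (val (fst z)) (val (snd z))), mk (w1 (val (fst z)) (val (snd z)))))
           (fun z : prod_space I I => Rmap Q P (I0, mk (w2 (val (fst z)) (val (snd z)))))).
  - apply open_notge, rcont_sndv.
  - apply open_notle, rcont_sndv.
  - intro z; lra.
  - intros z Hz. unfold Mmap. destruct (Rle_dec _ _); [reflexivity|lra].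
  - intros z Hz. unfold Mmap. destruct (Rle_dec _ _); [|reflexivity].
    assert (Hu : val (snd z) = 1/2) by lra.
    rewrite Hu. set (s := val (fst z)).
    assert (Ha : aa (1/2) = 1/4) by (unfold aa, Rmin; destruct (Rle_dec _ _); lra).
    assert (Hw : w1 s (1/2) = w2 s (1/2)) by (unfold w1, w2; f_equal; f_equal; lra).
    rewrite Hw. unfold p1. rewrite Ha.
    destruct (Rle_dec s (1/4)).
    { rewrite mk0 by lra. reflexivity. }
    destruct (Rle_dec (3/4) s).
    { rewrite mk1 by lra. apply Rmap_side; auto. }
    assert (Hw2 : w2 s (1/2) = 0).
    { unfold w2. unfold Rmin. repeat destruct (Rle_dec _ _); lra. }
    rewrite Hw2, (mk0 0) by lra. rewrite !Rmap_bot. rewrite B. symmetry; apply B.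
  - apply (@cont_comp _ (prod_space I I) _ (fun z : prod_space I I => (mk (p1 (val (fst z)) (val (snd z))), mk (w1 (val (fst z)) (val (snd z))))) (Rmap Q P)); auto.
    apply cont_pair; apply cont_mk; [apply rcont_p1|apply rcont_w1].
  - apply (@cont_comp _ (prod_space I I) _ (fun z : prod_space I I => (I0, mk (w2 (val (fst z)) (val (snd z))))) (Rmap Q P)); auto.
    apply cont_pair; [apply cont_const|apply cont_mk, rcont_w2].
Qed.

Lemma Mmap_bot {X : space} (Q P : prod_space I I -> X) s : Mmap Q P (s, I0) = Q (s, I1).
Proof.
  unfold Mmap; cbn [fst snd]. rewrite val_I0. destruct (Rle_dec _ _); [|lra].
  pose proof (val_bnd s).
  assert (Ha : aa 0 = 0) by (unfold aa, Rmin; destruct (Rle_dec _ _); lra).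
  unfold p1; rewrite Ha.
  assert (Hw : w1 (val s) 0 = 1) by (unfold w1, Rmin; repeat destruct (Rle_dec _ _); lra).
  rewrite Hw, (mk1 1) by lra. rewrite Rmap_top. f_equal. f_equal.
  replace ((val s - 0) * (1 + 4 * 0)) with (val s) by ring. apply mk_val.
Qed.

Lemma Mmap_top {X : space} (Q P : prod_space I I -> X) s : Mmap Q P (s, I1) = Q (I0, I1).
Proof.
  unfold Mmap; cbn [fst snd]. rewrite val_I1. destruct (Rle_dec _ _); [lra|].
  pose proof (val_bnd s).
  assert (Hw : w2 (val s) 1 = 1) by (unfold w2, Rmin; repeat destruct (Rle_dec _ _); lra).
  rewrite Hw, (mk1 1) by lra. apply Rmap_top.
Qed.

Lemma Mmap_left {X : space} (Q P : prod_space I I -> X) t : Mmap Q P (I0, t) = Q (I0, I1).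
Proof.
  unfold Mmap; cbn [fst snd]. rewrite val_I0. pose proof (val_bnd t).
  destruct (Rle_dec _ _).
  - assert (Ha : 0 <= aa (val t)) by (unfold aa, Rmin; destruct (Rle_dec _ _); lra).
    assert (Hw : w1 0 (val t) = 1) by (unfold w1, Rmin; repeat destruct (Rle_dec _ _); lra).
    rewrite Hw, (mk1 1) by lra. rewrite mk0 by (unfold p1; nra). apply Rmap_top.
  - assert (Hw : w2 0 (val t) = 1) by (unfold w2, Rmin; repeat destruct (Rle_dec _ _); lra).
    rewrite Hw, (mk1 1) by lra. apply Rmap_top.
Qed.

Lemma Mmap_right {X : space} (Q P : prod_space I I -> X) t :
  (forall t, Q (I1, t) = Q (I0, t)) -> (forall t, P (I1, t) = P (I0, t)) ->
  Mmap Q P (I1, t) = Q (I0, I1).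
Proof.
  intros S1 S2.
  unfold Mmap; cbn [fst snd]. rewrite val_I1. pose proof (val_bnd t).
  destruct (Rle_dec _ _).
  - assert (Ha : 0 <= aa (val t) <= 1/4) by (unfold aa, Rmin; destruct (Rle_dec _ _); lra).
    assert (Hw : w1 1 (val t) = 1) by (unfold w1, Rmin; repeat destruct (Rle_dec _ _); lra).
    rewrite Hw, (mk1 1) by lra. rewrite (mk1 (p1 _ _)) by (unfold p1; nra).
    rewrite Rmap_side by auto. apply Rmap_top.
  - assert (Hw : w2 1 (val t) = 1) by (unfold w2, Rmin; repeat destruct (Rle_dec _ _); lra).
    rewrite Hw, (mk1 1) by lra. apply Rmap_top.
Qed.

Lemma triv_back {X : space} (h : X -> X) (H : prod_space X I -> X) (x : X) (b : I -> X) :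
  continuous H -> (forall y, H (y, I0) = h y) -> (forall y, H (y, I1) = y) ->
  loop_at x b -> trivial_loop (h x) (fun s => h (b s)) -> trivial_loop x b.
Proof.
  intros CH H0 H1 [Cb [b0 b1]] [P [CP [P0 [P1 [PL PR]]]]].
  set (Q := fun z : prod_space I I => H (b (fst z), snd z)).
  assert (CQ : continuous Q).
  { apply (@cont_comp _ (prod_space X I) _ (fun z : prod_space I I => (b (fst z), snd z)) H); auto.
    apply cont_pair; [apply (@cont_comp (prod_space I I) I X (fun z => fst z) b); auto; apply cont_fst|apply cont_snd]. }
  assert (S1 : forall t, Q (I1, t) = Q (I0, t)) by (intro; unfold Q; simpl; rewrite b0, b1; auto).
  assert (S2 : forall t, P (I1, t) = P (I0, t)) by (intro; rewrite PL, PR; auto).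
  exists (Mmap Q P). split; [|split; [|split; [|split]]].
  - apply Mmap_cont; auto.
    + intro p. rewrite P0. unfold Q; simpl. apply H0.
    + intro p. rewrite P1, P1. auto.
  - intro s. rewrite Mmap_bot. unfold Q; simpl. apply H1.
  - intro s. rewrite Mmap_top. unfold Q; simpl. rewrite H1; auto.
  - intro t. rewrite Mmap_left. unfold Q; simpl. rewrite H1; auto.
  - intro t. rewrite Mmap_right by auto. unfold Q; simpl. rewrite H1; auto.
Qed.

Lemma triv_comp {X Y : space} (g : X -> Y) (x : X) (a : I -> X) :
  continuous g -> trivial_loop x a -> trivial_loop (g x) (fun s => g (a s)).
Proof.
  intros Cg [P [CP [P0 [P1 [PL PR]]]]].
  exists (fun z => g (P z)). split; [apply cont_comp; auto|].
  split; [|split; [|split]]; intros; cbv beta; [rewrite P0|rewrite P1|rewrite PL|rewrite PR]; reflexivity.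
Qed.

Definition pi1inj {X Y : space} (f : X -> Y) : Prop :=
  forall x a, loop_at x a -> ~ trivial_loop x a -> ~ trivial_loop (f x) (fun s => f (a s)).

Lemma pi1inj_left_inv {X Y : space} (f : X -> Y) (g : Y -> X) :
  continuous f -> continuous g -> homotopic (fun x => g (f x)) (fun x => x) -> pi1inj f.
Proof.
  intros Cf Cg [H [CH [H0 H1]]] x a La Na T.
  apply Na. apply (triv_back (fun x => g (f x)) H x a CH H0 H1 La).
  apply (triv_comp g _ _ Cg T).
Qed.

Lemma loop_comp {X Y : space} (f : X -> Y) x a : continuous f -> loop_at x a -> loop_at (f x) (fun s => f (a s)).
Proof. intros Cf [Ca [a0 a1]]. split; [apply cont_comp; auto|]. rewrite a0, a1; auto. Qed.

Lemma nbhd_pre {X Y : space} (f : X -> Y) x N : continuous f -> nbhd (f x) N -> nbhd x (fun y => N (f y)).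
Proof.
  intros Cf [U [HU [Ux HUN]]]. exists (fun y => U (f y)). split; [apply Cf; auto|split; auto].
Qed.

Lemma w_map {X Y : space} (f : X -> Y) x : continuous f -> pi1inj f -> w_pred X x -> w_pred Y (f x).
Proof.
  intros Cf Jf Wx N HN. destruct (Wx _ (nbhd_pre f x N Cf HN)) as [a [La [Na Ta]]].
  exists (fun s => f (a s)). split; [apply loop_comp; auto|split; auto].
Qed.

Lemma aw_map {X Y : space} (f : X -> Y) x : continuous f -> pi1inj f -> aw_pred X x -> aw_pred Y (f x).
Proof.
  intros Cf Jf [a [Ha Hn]]. exists (fun n s => f (a n s)). split.
  - intro n. destruct (Ha n) as [La Ta]. split; [apply loop_comp; auto|]. apply Jf; auto.
  - intros N HN. destruct (Hn _ (nbhd_pre f x N Cf HN)) as [n0 Hn0]. exists n0. auto.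
Qed.

Lemma aw_w {X : space} x : aw_pred X x -> w_pred X x.
Proof.
  intros [a [Ha Hn]] N HN. destruct (Hn N HN) as [n0 Hn0].
  exists (a n0). destruct (Ha n0). split; [auto|split; auto].
Qed.

Lemma nbhd_and {X : space} (x : X) N M : nbhd x N -> nbhd x M -> nbhd x (fun y => N y /\ M y).
Proof.
  intros [U [HU [Ux HUN]]] [V [HV [Vx HVM]]]. exists (fun y => U y /\ V y).
  split; [apply open_inter; auto|split; auto].
  intros y [Uy Vy]; auto.
Qed.

Lemma fc_w_aw {Y : space} (y : Y) : first_countable Y -> w_pred Y y -> aw_pred Y y.
Proof.
  intros FC Wy. destruct (FC y) as [B [HB HBN]].
  set (C := fun n z => forall k, (k <= n)%nat -> B k z).
  assert (HC : forall n, nbhd y (C n)).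
  { induction n.
    - destruct (HB 0%nat) as [U [HU [Uy HUB]]]. exists U. split; [auto|split; auto].
      intros z Uz k Hk. assert (k = 0%nat) by lia. subst; auto.
    - destruct (nbhd_and y _ _ IHn (HB (S n))) as [U [HU [Uy HUB]]].
      exists U; split; [auto|split; auto]. intros z Uz k Hk.
      destruct (HUB z Uz) as [H1 H2]. destruct (Nat.eq_dec k (S n)); [subst; auto|].
      apply H1; lia. }
  assert (Ex : forall n, exists a, loop_at y a /\ (forall s, C n (a s)) /\ ~ trivial_loop y a).
  { intro n. apply Wy, HC. }
  destruct (choice _ Ex) as [a Ha].
  exists a. split.
  - intro n. destruct (Ha n) as [L [_ T]]; auto.
  - intros N HN. destruct (HBN N HN) as [n Hn]. exists n. intros m Hm s.
    apply Hn. destruct (Ha m) as [_ [Hc _]]. apply (Hc s n Hm).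
Qed.

Lemma sub_eq {X : space} (P : X -> Prop) (a b : subspace X P) : proj1_sig a = proj1_sig b -> a = b.
Proof. destruct a, b; simpl; intro; subst; f_equal; apply proof_irrelevance. Qed.

Lemma slice_cont {X Y : space} (H : prod_space X I -> Y) (t : I) : continuous H -> continuous (fun y => H (y, t)).
Proof.
  intro CH. apply (@cont_comp X (prod_space X I) Y (fun y => (y, t)) H); auto.
  apply cont_pair; [apply cont_id|apply cont_const].
Qed.

Lemma slice_inj {X : space} (H : prod_space X I -> X) (t : I) :
  continuous H -> (forall y, H (y, I1) = y) -> pi1inj (fun y => H (y, t)).
Proof.
  intros CH H1 x a La Na T. apply Na.
  set (K := fun p : prod_space X I => H (fst p, mk (val t + (1 - val t) * val (snd p)))).
  apply (triv_back (fun y => H (y, t)) K x a); auto.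
  - apply (@cont_comp (prod_space X I) (prod_space X I) X (fun p : prod_space X I => (fst p, mk (val t + (1 - val t) * val (snd p)))) H); auto.
    apply cont_pair; [apply cont_fst|]. apply cont_mk.
    apply rcont_plus; [apply rcont_const|]. apply rcont_scal. apply rcont_val, cont_snd.
  - intro y. unfold K; cbn [fst snd]. rewrite val_I0. replace (val t + (1 - val t) * 0) with (val t) by ring.
    rewrite mk_val. reflexivity.
  - intro y. unfold K; cbn [fst snd]. rewrite val_I1. rewrite (mk1 (val t + (1 - val t) * 1)) by lra. apply H1.
Qed.

Theorem mainTheorem7 (X : space) :
  ~ homotopy_equivalent (w_space X) (aw_space X) ->
  forall Y : space, first_countable Y -> ~ homotopy_equivalent X Y.
Proof.
  intros Hne Y FC [f [g [Cf [Cg [Hgf Hfg]]]]]. apply Hne.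
  pose proof (pi1inj_left_inv f g Cf Cg Hgf) as Jf.
  pose proof (pi1inj_left_inv g f Cg Cf Hfg) as Jg.
  destruct Hgf as [H [CH [H0 H1]]].
  assert (FW : forall x, w_pred X x -> aw_pred X (g (f x))).
  { intros x Wx. apply aw_map; auto. apply fc_w_aw; auto. apply w_map; auto. }
  set (F := fun z : w_space X => (exist _ (g (f (proj1_sig z))) (FW _ (proj2_sig z)) : aw_space X)).
  set (G := fun z : aw_space X => (exist _ (proj1_sig z) (aw_w _ (proj2_sig z)) : w_space X)).
  exists F, G. split; [|split; [|split]].
  - apply cont_into_sub. unfold F; simpl.
    apply (cont_comp (fun z : w_space X => proj1_sig z) (fun x => g (f x))); [apply cont_proj|].
    apply cont_comp; auto.
  - apply cont_into_sub. unfold G; simpl. apply cont_proj.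
  - set (K := fun p : prod_space (w_space X) I =>
          (exist _ (H (proj1_sig (fst p), snd p))
             (w_map (fun y => H (y, snd p)) _ (slice_cont H (snd p) CH) (slice_inj H (snd p) CH H1) (proj2_sig (fst p)))
           : w_space X)).
    exists K. split; [|split].
    + apply cont_into_sub. unfold K; simpl.
      apply (@cont_comp _ (prod_space X I) X (fun p : prod_space (w_space X) I => (proj1_sig (fst p), snd p)) H); auto.
      apply cont_pair; [|apply cont_snd].
      apply (@cont_comp _ (w_space X) X (fun p : prod_space (w_space X) I => fst p) (fun z => proj1_sig z)); [apply cont_fst|apply cont_proj].
    + intro z. apply sub_eq. unfold K, F, G; simpl. apply H0.
    + intro z. apply sub_eq. unfold K; simpl. apply H1.
  - set (K := fun p : prod_space (aw_space X) I =>
          (exist _ (H (proj1_sig (fst p), snd p))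
             (aw_map (fun y => H (y, snd p)) _ (slice_cont H (snd p) CH) (slice_inj H (snd p) CH H1) (proj2_sig (fst p)))
           : aw_space X)).
    exists K. split; [|split].
    + apply cont_into_sub. unfold K; simpl.
      apply (@cont_comp _ (prod_space X I) X (fun p : prod_space (aw_space X) I => (proj1_sig (fst p), snd p)) H); auto.
      apply cont_pair; [|apply cont_snd].
      apply (@cont_comp _ (aw_space X) X (fun p : prod_space (aw_space X) I => fst p) (fun z => proj1_sig z)); [apply cont_fst|apply cont_proj].
    + intro z. apply sub_eq. unfold K, F, G; simpl. apply H0.
    + intro z. apply sub_eq. unfold K; simpl. apply H1.
Qed.
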